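(* Let $F$ be a field, $G$ a finite group, $V$ a finite-dimensional $FG$-module, $R:=S[V]^G$, and let $\mathcal F=\{f_1,\dots,f_n\}\subseteq R$ be a homogeneous system of parameters of $R$. Let $H\le G$ be a subgroup with $\mathrm{char}(F)\nmid[G\colon H]$ and put $S:=S[V]^H$. Let $\pi\colon R\to S/(\sum_{i=1}^n f_iS)$ be the composition of the inclusion $R\subseteq S$ with the natural projection. Then $\ker(\pi)=F[\mathcal F]_+R$, where $F[\mathcal F]_+$ is the ideal of the polynomial algebra $F[\mathcal F]$ generated by $f_1,\dots,f_n$. Consequently $\pi$ induces an injective map $R/F[\mathcal F]_+R\to S/(\sum_i f_iS)$; so if moreover $R$ is Cohen–Macaulay and $\mathcal G\subseteq R$ is a set of homogeneous elements whose cardinality and multiset of degrees agree with those of a minimal homogeneous generating set of the $F[\mathcal F]$-module $R$, then $\mathcal G$ generates $R$ as an $F[\mathcal F]$-module if and only if $\pi(\mathcal G)$ is $F$-linearly independent in $S/(\sum_i f_iS)$.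
   Context: $S[V]$ denotes the symmetric algebra over $V$ with induced $G$-action; $S[V]^G$, $S[V]^H$ the invariant subrings. A homogeneous system of parameters of $R$ is a set of $\dim R$ homogeneous elements of positive degree, algebraically independent, over whose generated polynomial subalgebra $R$ is a finitely generated module. $R$ is Cohen–Macaulay if it is a free module over this subalgebra. *)

(* Defs.v *)
From HB Require Import structures.
From mathcomp Require Import all_boot all_order all_algebra all_fingroup.
From mathcomp Require Import mxrepresentation.
From mathcomp Require Import mpoly.
Set Implicit Arguments. Unset Strict Implicit. Unset Printing Implicit Defensive.
Import Order.TTheory GRing.Theory.
Local Open Scope ring_scope.

(* S[V], for V = F^d (row vectors, basis e_0..e_(d-1)), is the polynomial
   ring {mpoly F[d]} in the basis vectors 'X_i = e_i.  A matrix A acts on V by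
   v |-> v *m A, hence on the basis by e_i |-> sum_j A i j e_j, and this
   extends uniquely to an F-algebra endomorphism of S[V]. *)
Definition lin_act (F : fieldType) (d : nat) (A : 'M[F]_d) (p : {mpoly F[d]})
  : {mpoly F[d]} :=
  p \mPo [tuple \sum_(j < d) A i j *: 'X_j | i < d].

Definition invariants (F : fieldType) (gT : finGroupType) (G : {set gT})
  (d : nat) (rG : gT -> 'M[F]_d) (p : {mpoly F[d]}) : Prop :=
  forall g, g \in G -> lin_act (rG g) p = p.

Definition is_homog (F : fieldType) (d : nat) (p : {mpoly F[d]}) : Prop :=
  exists k : nat, p \is k.-homog.

Definition hdeg (F : fieldType) (d : nat) (p : {mpoly F[d]}) : nat :=
  (msize p).-1.

Definition polysub (F : fieldType) (d n : nat) (f : 'I_n -> {mpoly F[d]})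
  (a : {mpoly F[d]}) : Prop :=
  exists P : {mpoly F[n]}, a = P \mPo [tuple f i | i < n].

Definition alg_indep (F : fieldType) (d n : nat) (f : 'I_n -> {mpoly F[d]})
  : Prop :=
  forall P : {mpoly F[n]}, P \mPo [tuple f i | i < n] = 0 -> P = 0.

Definition lin_comb (F : fieldType) (d : nat) (A : {mpoly F[d]} -> Prop)
  (gs : seq {mpoly F[d]}) (x : {mpoly F[d]}) : Prop :=
  exists a : 'I_(size gs) -> {mpoly F[d]},
    (forall j, A (a j)) /\ x = \sum_(j < size gs) a j * gs`_j.

Definition generates (F : fieldType) (d : nat) (A R : {mpoly F[d]} -> Prop)
  (gs : seq {mpoly F[d]}) : Prop :=
  (forall g, g \in gs -> R g) /\ (forall r, R r -> lin_comb A gs r).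

Definition fin_gen_module (F : fieldType) (d : nat) (A R : {mpoly F[d]} -> Prop)
  : Prop := exists gs : seq {mpoly F[d]}, generates A R gs.

Definition hsop (F : fieldType) (d n : nat) (R : {mpoly F[d]} -> Prop)
  (f : 'I_n -> {mpoly F[d]}) : Prop :=
  [/\ forall i, R (f i),
      forall i, exists k : nat, (0 < k)%N /\ f i \is k.-homog,
      alg_indep f
    & fin_gen_module (polysub f) R].

Definition free_module (F : fieldType) (d : nat) (A R : {mpoly F[d]} -> Prop)
  : Prop :=
  exists B : seq {mpoly F[d]},
    generates A R B /\
    (forall a : 'I_(size B) -> {mpoly F[d]}, (forall j, A (a j)) ->
       \sum_(j < size B) a j * B`_j = 0 -> forall j, a j = 0).

Definition cohen_macaulay (F : fieldType) (d n : nat) (R : {mpoly F[d]} -> Prop)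
  (f : 'I_n -> {mpoly F[d]}) : Prop := free_module (polysub f) R.

Definition Fplus (F : fieldType) (d n : nat) (f : 'I_n -> {mpoly F[d]})
  (a : {mpoly F[d]}) : Prop :=
  exists b : 'I_n -> {mpoly F[d]},
    (forall i, polysub f (b i)) /\ a = \sum_(i < n) f i * b i.

Definition FplusR (F : fieldType) (d n : nat) (f : 'I_n -> {mpoly F[d]})
  (R : {mpoly F[d]} -> Prop) (x : {mpoly F[d]}) : Prop :=
  exists s : seq ({mpoly F[d]} * {mpoly F[d]}),
    (forall q, q \in s -> Fplus f q.1 /\ R q.2) /\
    x = \sum_(q <- s) q.1 * q.2.

Definition in_ideal (F : fieldType) (d n : nat) (S : {mpoly F[d]} -> Prop)
  (f : 'I_n -> {mpoly F[d]}) (x : {mpoly F[d]}) : Prop :=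
  exists s : 'I_n -> {mpoly F[d]},
    (forall i, S (s i)) /\ x = \sum_(i < n) f i * s i.

Definition min_homog_gen (F : fieldType) (d : nat) (A R : {mpoly F[d]} -> Prop)
  (hs : seq {mpoly F[d]}) : Prop :=
  [/\ uniq hs, forall h, h \in hs -> is_homog h, generates A R hs
    & forall hs', {subset hs' <= hs} -> generates A R hs' -> {subset hs <= hs'}].

Definition lin_indep_mod (F : fieldType) (d n : nat) (S : {mpoly F[d]} -> Prop)
  (f : 'I_n -> {mpoly F[d]}) (gs : seq {mpoly F[d]}) : Prop :=
  forall c : 'I_(size gs) -> F,
    in_ideal S f (\sum_(j < size gs) c j *: gs`_j) -> forall j, c j = 0.

(* Main.v *)
Require Import Defs.
From Stdlib Require Import ClassicalEpsilon.
From HB Require Import structures.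
From mathcomp Require Import all_boot all_order all_algebra all_fingroup.
From mathcomp Require Import mxrepresentation.
From mathcomp Require Import mpoly.
Set Implicit Arguments. Unset Strict Implicit. Unset Printing Implicit Defensive.
Import Order.TTheory GRing.Theory.
Local Open Scope ring_scope.

Section LinAct.
Variables (F : fieldType) (d : nat).
Implicit Types (A B : 'M[F]_d) (p q : {mpoly F[d]}).

Definition tA A : d.-tuple {mpoly F[d]} := [tuple \sum_(j < d) A i j *: 'X_j | i < d].

Lemma lin_actE A p : lin_act A p = comp_mpoly (tA A) p.
Proof. by []. Qed.

Lemma lin_actD A p q : lin_act A (p + q) = lin_act A p + lin_act A q.
Proof. by rewrite !lin_actE rmorphD. Qed.
Lemma lin_actM A p q : lin_act A (p * q) = lin_act A p * lin_act A q.
Proof. by rewrite !lin_actE rmorphM. Qed.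
Lemma lin_actZ A c p : lin_act A (c *: p) = c *: lin_act A p.
Proof. by rewrite !lin_actE linearZ. Qed.
Lemma lin_actC A c : lin_act A c%:MP = c%:MP.
Proof. by rewrite !lin_actE comp_mpolyC. Qed.
Lemma lin_actN A p : lin_act A (- p) = - lin_act A p.
Proof. by rewrite !lin_actE rmorphN. Qed.
Lemma lin_act0 A : lin_act A 0 = 0.
Proof. by rewrite !lin_actE rmorph0. Qed.
Lemma lin_act_sum A (I : Type) (r : seq I) (P : pred I) (E : I -> {mpoly F[d]}) :
  lin_act A (\sum_(i <- r | P i) E i) = \sum_(i <- r | P i) lin_act A (E i).
Proof. by rewrite !lin_actE rmorph_sum. Qed.

Lemma lin_act_tA A B i : lin_act B (tnth (tA A) i) = tnth (tA (A *m B)) i.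
Proof.
rewrite !tnth_mktuple lin_act_sum.
under eq_bigr => j _ do rewrite lin_actZ lin_actE comp_mpolyXU -tnth_nth tnth_mktuple.
under eq_bigr => j _ do rewrite scaler_sumr.
rewrite exchange_big /=; apply: eq_bigr => k _.
rewrite mxE scaler_suml; apply: eq_bigr => j _; by rewrite scalerA.
Qed.

Lemma lin_act_mul A B p : lin_act (A *m B) p = lin_act B (lin_act A p).
Proof.
rewrite [lin_act A p]lin_actE comp_mpolyE lin_act_sum lin_actE comp_mpolyE.
apply: eq_bigr => m _; rewrite lin_actZ; congr (_ *: _).
rewrite lin_actE rmorph_prod; apply: eq_bigr => i _.
by rewrite rmorphXn -lin_act_tA.
Qed.

End LinAct.
Section T.
Variables (F : fieldType) (d : nat).
Implicit Types (A B : 'M[F]_d) (p q : {mpoly F[d]}) (m : 'X_{1..d}).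

Lemma tA_homog A i : tnth (tA A) i \is 1.-homog.
Proof.
rewrite tnth_mktuple; apply: rpred_sum => j _; apply: rpredZ.
by rewrite dhomogX; apply/eqP; exact: mdeg1.
Qed.

Lemma lin_actX_homog A m : lin_act A 'X_[m] \is (mdeg m).-homog.
Proof.
rewrite lin_actE comp_mpolyX mdegE.
apply: (big_ind2 (fun (p : {mpoly F[d]}) (k : nat) => p \is k.-homog)).
- exact: dhomog1.
- by move=> x1 k1 x2 k2 h1 h2; apply: dhomogM.
- move=> i _; rewrite -[X in X.-homog]mul1n; exact: dhomogMn (tA_homog A i).
Qed.

Lemma pihomog_of_homog k e (p : {mpoly F[d]}) : p \is e.-homog ->
  pihomog mdeg k p = if e == k then p else 0.
Proof.
move=> hp; case: eqP => [<-|/eqP ne]; first exact: pihomog_dE.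
exact: (pihomog_ne0 ne hp).
Qed.

Lemma pihomog_lin_act A k p :
  pihomog mdeg k (lin_act A p) = lin_act A (pihomog mdeg k p).
Proof.
rewrite lin_actE comp_mpolyEX linear_sum pihomogE.
rewrite lin_actE rmorph_sum [RHS]big_mkcond /=; apply: eq_bigr => m _.
rewrite linearZ /= -lin_actE (pihomog_of_homog k (lin_actX_homog A m)).
case: eqP => _; rewrite ?scaler0 ?rmorph0 //.
by rewrite lin_actE linearZ.
Qed.
End T.
Section T3.
Variables (F : fieldType) (d : nat).
Implicit Types (A B : 'M[F]_d) (p q : {mpoly F[d]}) (m : 'X_{1..d}).
Lemma pihomogM_homog k e p q : p \is e.-homog ->
  pihomog mdeg k (p * q) = if (e <= k)%N then p * pihomog mdeg (k - e) q else 0.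
Proof.
move=> hp.
have hK : (msize q <= (msize q + k).+1)%N by rewrite ltnW // ltnS leq_addr.
rewrite {1}[q](pihomog_partitionE hK) mulr_sumr linear_sum /=.
under eq_bigr => j _ do rewrite (pihomog_of_homog k (dhomogM hp (pihomogP mdeg j q))).
case: leqP => hek.
  have hj : (k - e < (msize q + k).+1)%N by rewrite ltnS (leq_trans (leq_subr _ _)) // leq_addl.
  rewrite (bigD1 (Ordinal hj)) //= subnKC // eqxx big1 ?addr0; last first.
    move=> j /eqP hne; case: eqP => // he; exfalso; apply: hne; apply: val_inj => /=.
    by move: he => /(congr1 (subn^~ e)) /=; rewrite addKn.
  by [].
apply: big1 => j _; case: eqP => // he; exfalso; move: hek.
by rewrite ltnNge; move/negP; apply; rewrite -he leq_addr.
Qed.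
End T3.

Section Main.
Variables (F : fieldType) (gT : finGroupType) (G H : {group gT}) (d n : nat)
  (rG : mx_representation F G d) (f : 'I_n -> {mpoly F[d]}).
Implicit Types (p q r s : {mpoly F[d]}).

Local Notation Rinv := (invariants G rG).
Local Notation SH := (invariants H rG).
Local Notation J := (in_ideal (invariants G rG) f).

Section InvClosure.
Variable K : {set gT}.
Lemma inv0 : invariants K rG 0.
Proof. by move=> g _; rewrite lin_act0. Qed.
Lemma invD p q : invariants K rG p -> invariants K rG q -> invariants K rG (p + q).
Proof. by move=> hp hq g hg; rewrite lin_actD hp ?hq. Qed.
Lemma invM p q : invariants K rG p -> invariants K rG q -> invariants K rG (p * q).
Proof. by move=> hp hq g hg; rewrite lin_actM hp ?hq. Qed.
Lemma invZ c p : invariants K rG p -> invariants K rG (c *: p).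
Proof. by move=> hp g hg; rewrite lin_actZ hp. Qed.
Lemma invN p : invariants K rG p -> invariants K rG (- p).
Proof. by move=> hp g hg; rewrite lin_actN hp. Qed.
Lemma invC c : invariants K rG c%:MP.
Proof. by move=> g hg; rewrite lin_actC. Qed.
Lemma inv1 : invariants K rG 1.
Proof. by move=> g hg; rewrite -mpolyC1 lin_actC. Qed.
Lemma invB p q : invariants K rG p -> invariants K rG q -> invariants K rG (p - q).
Proof. by move=> hp hq; apply: invD => //; apply: invN. Qed.
Lemma inv_sum (I : Type) (rr : seq I) (P : pred I) (E : I -> {mpoly F[d]}) :
  (forall i, P i -> invariants K rG (E i)) -> invariants K rG (\sum_(i <- rr | P i) E i).
Proof. by move=> h; apply: big_ind => //; [exact: inv0 | exact: invD]. Qed.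
Lemma inv_prod (I : Type) (rr : seq I) (P : pred I) (E : I -> {mpoly F[d]}) :
  (forall i, P i -> invariants K rG (E i)) -> invariants K rG (\prod_(i <- rr | P i) E i).
Proof. by move=> h; apply: big_ind => //; [exact: inv1 | exact: invM]. Qed.
Lemma invX p k : invariants K rG p -> invariants K rG (p ^+ k).
Proof. by move=> hp; elim: k => [|k ih]; [rewrite expr0; exact: inv1 | rewrite exprS; apply: invM]. Qed.
Lemma inv_pihomog k p : invariants K rG p -> invariants K rG (pihomog mdeg k p).
Proof. by move=> hp g hg; rewrite -pihomog_lin_act hp. Qed.
End InvClosure.

Hypothesis sHG : H \subset G.

Lemma RinvSH p : Rinv p -> SH p.
Proof. by move=> hp g hg; apply: hp; apply: (subsetP sHG). Qed.

Definition Tr s := \sum_(C in rcosets H G) lin_act (rG (repr C)) s.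

Lemma coset_val x y s : x \in G -> y \in G -> (x * y^-1)%g \in H -> SH s ->
  lin_act (rG x) s = lin_act (rG y) s.
Proof.
move=> hx hy hxy hs.
have -> : x = ((x * y^-1) * y)%g by rewrite mulgKV.
rewrite repr_mxM; [|exact: (subsetP sHG) _ hxy | exact: hy].
by rewrite /= lin_act_mul hs.
Qed.

Lemma repr_inG C : C \in rcosets H G -> repr C \in G.
Proof.
case/rcosetsP => x hx ->; have := mem_repr_rcoset H x.
rewrite mem_rcoset => h; rewrite -(mulgKV x (repr _)); apply: groupM => //.
exact: (subsetP sHG).
Qed.

Lemma same_coset a b z : a \in (H :* z)%g -> b \in (H :* z)%g -> (a * b^-1)%g \in H.
Proof.
move=> /rcoset_eqP ha /rcoset_eqP hb; rewrite -mem_rcoset hb -ha; exact: rcoset_refl.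
Qed.

Lemma Tr_inv s : SH s -> Rinv (Tr s).
Proof.
move=> hs g hg; rewrite /Tr lin_act_sum.
rewrite [RHS](reindex_acts 'Rs (actsRs_rcosets H G) hg).
apply: eq_bigr => C hC; rewrite -(lin_act_mul (rG (repr C)) (rG g)) -(repr_mxM rG (repr_inG hC) hg) /=.
have hC' : rcoset C g \in rcosets H G by rewrite (actsP (actsRs_rcosets H G)).
apply: coset_val => //; [by apply: groupM => //; apply: repr_inG | exact: repr_inG |].
case/rcosetsP: hC => x hx eC.
apply: (@same_coset _ _ (x * g)%g); rewrite rcosetM -eC.
  rewrite mem_rcoset mulgK eC. exact: mem_repr_rcoset.
rewrite rcosetE eC -rcosetM; exact: mem_repr_rcoset.
Qed.

Lemma Tr_R r : Rinv r -> Tr r = r *+ #|G : H|%g.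
Proof.
move=> hr; rewrite /Tr (eq_bigr (fun _ => r)); last by move=> C hC; rewrite hr ?repr_inG.
by rewrite sumr_const.
Qed.

Lemma Tr_mul r s : Rinv r -> Tr (r * s) = r * Tr s.
Proof.
move=> hr; rewrite /Tr mulr_sumr; apply: eq_bigr => C hC.
by rewrite lin_actM hr ?repr_inG.
Qed.

Lemma Tr_sum (I : Type) (rr : seq I) (P : pred I) (E : I -> {mpoly F[d]}) :
  Tr (\sum_(i <- rr | P i) E i) = \sum_(i <- rr | P i) Tr (E i).
Proof.
rewrite /Tr; under eq_bigr do rewrite lin_act_sum.
rewrite (exchange_big_dep P) //=; apply: eq_bigr => i hi.
by apply: eq_bigl => C; rewrite hi andbT.

Qed.

Hypothesis hchar : forall p : nat, p \in [pchar F] -> ~~ (p %| #|G : H|%g)%N.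

Hypothesis hf : forall i, Rinv (f i).

Lemma idx_ne0 : (#|G : H|%g)%:R != 0 :> F.
Proof.
rewrite natf_neq0_pchar; apply/pnatP => [|p pp hp]; first exact: indexg_gt0.
by rewrite inE /=; apply/negP => /hchar; rewrite hp.
Qed.

Lemma J0 : J 0.
Proof. exists (fun _ => 0); split => [i|]; first exact: inv0. by rewrite big1 // => i _; rewrite mulr0. Qed.

Lemma JD x y : J x -> J y -> J (x + y).
Proof.
move=> [s [hs ->]] [t [ht ->]]; exists (fun i => s i + t i); split => [i|].
  exact: invD.
by rewrite -big_split /=; apply: eq_bigr => i _; rewrite mulrDr.
Qed.

Lemma JM y x : Rinv y -> J x -> J (y * x).
Proof.
move=> hy [s [hs ->]]; exists (fun i => y * s i); split => [i|].
  exact: invM.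
by rewrite mulr_sumr; apply: eq_bigr => i _; rewrite mulrCA.
Qed.

Lemma JZ c x : J x -> J (c *: x).
Proof. by move=> hx; rewrite -mul_mpolyC; apply: JM => //; exact: invC. Qed.

Lemma JN x : J x -> J (- x).
Proof. by move=> hx; rewrite -scaleN1r; apply: JZ. Qed.

Lemma JB x y : J x -> J y -> J (x - y).
Proof. by move=> hx hy; apply: JD => //; apply: JN. Qed.

Lemma J_sum (I : Type) (rr : seq I) (P : pred I) (E : I -> {mpoly F[d]}) :
  (forall i, P i -> J (E i)) -> J (\sum_(i <- rr | P i) E i).
Proof. by move=> h; apply: big_ind => //; [exact: J0 | exact: JD]. Qed.

Lemma J_f i y : Rinv y -> J (f i * y).
Proof.
move=> hy; exists (fun j => if j == i then y else 0); split => [j|].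
  by case: eqP => _ //; exact: inv0.
rewrite (bigD1 i) //= eqxx big1 ?addr0 // => j /negbTE ->; by rewrite mulr0.
Qed.

Lemma J_SH x : J x -> in_ideal SH f x.
Proof. by move=> [s [hs ->]]; exists s; split => // i; apply: RinvSH. Qed.

Lemma Tr_J r : Rinv r -> in_ideal SH f r -> J r.
Proof.
move=> hr hI; have [s [hs es]] := hI.
have e : r = ((#|G : H|%g)%:R)^-1 *: Tr r.
  by rewrite Tr_R // -scaler_nat scalerA mulVf ?idx_ne0 // scale1r.
rewrite e; apply: JZ; rewrite es Tr_sum; apply: J_sum => i _.
by rewrite Tr_mul ?hf //; apply: J_f; apply: Tr_inv.
Qed.

Local Notation tf := [tuple f i | i < n].
Local Notation A := (polysub f).

Lemma A_C c : A c%:MP.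
Proof. by exists c%:MP; rewrite comp_mpolyC. Qed.
Lemma A_0 : A 0.
Proof. by exists 0; rewrite comp_mpoly0. Qed.
Lemma A_1 : A 1.
Proof. by exists 1; rewrite comp_mpoly1. Qed.
Lemma A_D a b : A a -> A b -> A (a + b).
Proof. by move=> [P ->] [Q ->]; exists (P + Q); rewrite rmorphD. Qed.
Lemma A_M a b : A a -> A b -> A (a * b).
Proof. by move=> [P ->] [Q ->]; exists (P * Q); rewrite rmorphM. Qed.
Lemma A_f i : A (f i).
Proof. by exists 'X_i; rewrite comp_mpolyXU -tnth_nth tnth_mktuple. Qed.
Lemma A_Z c a : A a -> A (c *: a).
Proof. by move=> ha; rewrite -mul_mpolyC; apply: A_M => //; exact: A_C. Qed.

Lemma A_inv a : A a -> Rinv a.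
Proof.
move=> [P ->]; rewrite comp_mpolyE; apply: inv_sum => m _; apply: invZ.
by apply: inv_prod => i _; apply: invX; rewrite tnth_mktuple.
Qed.

Lemma Fplus_J a r : Fplus f a -> Rinv r -> J (a * r).
Proof.
move=> [b [hb ->]] hr; rewrite mulr_suml; apply: J_sum => i _.
by rewrite -mulrA; apply: J_f; apply: invM => //; apply: A_inv.
Qed.

Lemma FplusR_J x : FplusR f Rinv x -> J x.
Proof.
move=> [s [hs ->]]; elim: s hs => [|q s ih] hs; first by rewrite big_nil; exact: J0.
rewrite big_cons; apply: JD; last by apply: ih => q' hq'; apply: hs; rewrite inE hq' orbT.
by have [h1 h2] := hs q (mem_head _ _); apply: Fplus_J.
Qed.

Lemma Fplus_f i : Fplus f (f i).
Proof.
exists (fun j => if j == i then 1 else 0); split => [j|].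
  by case: eqP => _; [exact: A_1 | exact: A_0].
rewrite (bigD1 i) //= eqxx mulr1 big1 ?addr0 // => j /negbTE ->; by rewrite mulr0.
Qed.

Lemma J_FplusR x : J x -> FplusR f Rinv x.
Proof.
move=> [s [hs ->]]; exists [seq (f i, s i) | i <- enum 'I_n]; split.
  by move=> q /mapP [i _ ->] /=; split; [exact: Fplus_f | exact: hs].
by rewrite big_map big_enum.
Qed.

Lemma part1 r : Rinv r -> (in_ideal SH f r <-> FplusR f Rinv r).
Proof.
move=> hr; split => [h|h]; first by apply: J_FplusR; apply: Tr_J.
by apply: J_SH; apply: FplusR_J.
Qed.

Lemma Fplus0 : Fplus f 0.
Proof. exists (fun _ => 0); split => [i|]; first exact: A_0. by rewrite big1 // => i _; rewrite mulr0. Qed.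
Lemma FplusD x y : Fplus f x -> Fplus f y -> Fplus f (x + y).
Proof.
move=> [s [hs ->]] [t [ht ->]]; exists (fun i => s i + t i); split => [i|].
  exact: A_D.
by rewrite -big_split /=; apply: eq_bigr => i _; rewrite mulrDr.
Qed.
Lemma FplusM b x : A b -> Fplus f x -> Fplus f (b * x).
Proof.
move=> hb [s [hs ->]]; exists (fun i => b * s i); split => [i|].
  exact: A_M.
by rewrite mulr_sumr; apply: eq_bigr => i _; rewrite mulrCA.
Qed.

Definition Kc a := A a /\ exists c : F, Fplus f (a - c%:MP).

Lemma KcD a b : Kc a -> Kc b -> Kc (a + b).
Proof.
move=> [ha [c1 h1]] [hb [c2 h2]]; split; first exact: A_D.
exists (c1 + c2); have -> : a + b - (c1 + c2)%:MP = (a - c1%:MP) + (b - c2%:MP).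
  by rewrite mpolyCD opprD addrACA.
exact: FplusD.
Qed.

Lemma KcM a b : Kc a -> Kc b -> Kc (a * b).
Proof.
move=> [ha [c1 h1]] [hb [c2 h2]]; split; first exact: A_M.
exists (c1 * c2).
have -> : a * b - (c1 * c2)%:MP = b * (a - c1%:MP) + c1%:MP * (b - c2%:MP).
  rewrite mpolyCM mulrBr mulrBr [b * a]mulrC [b * _]mulrC addrA; congr (_ + _).
  by rewrite subrK.
by apply: FplusD; apply: FplusM => //; exact: A_C.
Qed.

Lemma KcC c : Kc c%:MP.
Proof. split; first exact: A_C. by exists c; rewrite subrr; exact: Fplus0. Qed.

Lemma Kcf i : Kc (f i).
Proof. split; first exact: A_f. by exists 0; rewrite subr0; exact: Fplus_f. Qed.

Lemma A_const a : A a -> exists c : F, Fplus f (a - c%:MP).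
Proof.
move=> [P ->]; suff : Kc (P \mPo tf) by case.
rewrite comp_mpolyE; apply: (big_ind Kc); [by rewrite -mpolyC0; exact: KcC | exact: KcD |].
move=> m _; rewrite -mul_mpolyC; apply: KcM; first exact: KcC.
apply: (big_ind Kc); [by rewrite -mpolyC1; exact: KcC | exact: KcM |].
move=> i _; rewrite tnth_mktuple; elim: (m i) => [|k ih]; first by rewrite expr0 -mpolyC1; exact: KcC.
by rewrite exprS; apply: KcM => //; exact: Kcf.
Qed.

Section LC.
Variable L : seq {mpoly F[d]}.
Local Notation LC := (lin_comb A L).

Lemma LC0 : LC 0.
Proof. exists (fun _ => 0); split => [j|]; first exact: A_0. by rewrite big1 // => j _; rewrite mul0r. Qed.
Lemma LCD x y : LC x -> LC y -> LC (x + y).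
Proof.
move=> [a [ha ->]] [b [hb ->]]; exists (fun j => a j + b j); split => [j|].
  exact: A_D.
by rewrite -big_split /=; apply: eq_bigr => j _; rewrite mulrDl.
Qed.
Lemma LCM b x : A b -> LC x -> LC (b * x).
Proof.
move=> hb [a [ha ->]]; exists (fun j => b * a j); split => [j|].
  exact: A_M.
by rewrite mulr_sumr; apply: eq_bigr => j _; rewrite mulrA.
Qed.
Lemma LC_sum (I : Type) (rr : seq I) (P : pred I) (E : I -> {mpoly F[d]}) :
  (forall i, P i -> LC (E i)) -> LC (\sum_(i <- rr | P i) E i).
Proof. by move=> h; apply: big_ind => //; [exact: LC0 | exact: LCD]. Qed.
Lemma LC_elems (beta : {mpoly F[d]} -> F) : LC (\sum_(y <- L) beta y *: y).
Proof.
exists (fun j => (beta L`_j)%:MP); split => [j|]; first exact: A_C.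
rewrite (big_nth 0) big_mkord; apply: eq_bigr => j _; by rewrite mul_mpolyC.
Qed.
End LC.

Lemma MI L x : generates A Rinv L -> Rinv x ->
  exists c : 'I_(size L) -> F, J (x - \sum_(j < size L) c j *: L`_j).
Proof.
move=> [hL gL] hx; have [a [ha ex]] := gL x hx.
pose cf j := proj1_sig (constructive_indefinite_description _ (A_const (ha j))).
have hcf j : Fplus f (a j - (cf j)%:MP) := proj2_sig (constructive_indefinite_description _ (A_const (ha j))).
exists cf; rewrite ex -sumrB; apply: J_sum => j _.
rewrite -mul_mpolyC -mulrBl; apply: Fplus_J => //; apply: hL; exact: mem_nth.
Qed.

Hypothesis hfh : forall i, exists k : nat, (0 < k)%N /\ f i \is k.-homog.

Lemma pihomog_homog_cases k (y : {mpoly F[d]}) : is_homog y -> pihomog mdeg k y = y \/ pihomog mdeg k y = 0.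
Proof. by move=> [e he]; rewrite (pihomog_of_homog k he); case: eqP; [left|right]. Qed.

Lemma nakayama (L : seq {mpoly F[d]}) :
  (forall y, y \in L -> Rinv y /\ is_homog y) ->
  (forall r, Rinv r -> exists e : {mpoly F[d]} -> F, J (r - \sum_(y <- L) e y *: y)) ->
  forall r, Rinv r -> lin_comb A L r.
Proof.
move=> hL hspan.
have hom : forall k r, Rinv r -> r \is k.-homog -> lin_comb A L r.
  elim/ltn_ind => k IH r hr hk.
  have [e [rho [hrho er]]] := hspan r hr.
  have er' : r = \sum_(y <- L) e y *: y + \sum_(i < n) f i * rho i by rewrite -er addrC subrK.
  rewrite -(pihomog_dE hk) er' linearD linear_sum /=; apply: LCD.
    pose beta y := if pihomog mdeg k y == y then e y else 0.
    rewrite (eq_big_seq (fun y => beta y *: y)); first exact: LC_elems.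
    move=> y hy; rewrite linearZ /= /beta.
    have [h|h] := pihomog_homog_cases k (proj2 (hL y hy)); rewrite h.
      by rewrite eqxx.
    by case: eqP => [<-|]; rewrite ?scaler0 ?scale0r.
  rewrite linear_sum /=; apply: LC_sum => i _.
  have [ei [hei hfi]] := hfh i.
  rewrite (pihomogM_homog k _ hfi); case: ifP => hle; last exact: LC0.
  apply: LCM; first exact: A_f.
  apply: (IH (k - ei)%N); first by rewrite ltn_subrL hei; case: k {IH hk er' hr} hle => //; rewrite leqNgt hei.
    exact: inv_pihomog.
  exact: pihomogP.
move=> r hr; rewrite (pihomog_partitionE (leqnn (msize r))); apply: LC_sum => k _.
by apply: (hom k); [exact: inv_pihomog | exact: pihomogP].
Qed.

Lemma sum_elems (L : seq {mpoly F[d]}) (c : 'I_(size L) -> F) : uniq L ->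
  \sum_(y <- L) (\sum_(j < size L | L`_j == y) c j) *: y = \sum_(j < size L) c j *: L`_j.
Proof.
move=> uL; rewrite (big_nth 0) big_mkord; apply: eq_bigr => j _; congr (_ *: _).
rewrite (eq_bigl (fun j' : 'I_(size L) => j' == j)) ?big_pred1_eq // => j'.
by rewrite nth_uniq.
Qed.

Lemma span_conv (L : seq {mpoly F[d]}) x : uniq L ->
  (exists c : 'I_(size L) -> F, J (x - \sum_(j < size L) c j *: L`_j)) ->
  exists e : {mpoly F[d]} -> F, J (x - \sum_(y <- L) e y *: y).
Proof.
move=> uL [c hc]; exists (fun y => \sum_(j < size L | L`_j == y) c j).
by rewrite sum_elems.
Qed.

Lemma HI (hs : seq {mpoly F[d]}) : min_homog_gen A Rinv hs ->
  forall c : 'I_(size hs) -> F, J (\sum_(j < size hs) c j *: hs`_j) -> forall j, c j = 0.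
Proof.
move=> [uh homh genh minh] c hc k; case: (eqVneq (c k) 0) => // hck; exfalso.
set hk := hs`_k.
have hkin : hk \in hs by apply: mem_nth.
pose hs' := filter (predC1 hk) hs.
have sub' : {subset hs' <= hs} by move=> y; rewrite mem_filter => /andP[].
suff gen' : generates A Rinv hs'.
  by have := minh hs' sub' gen' hk hkin; rewrite mem_filter /= eqxx.
split; first by move=> g /sub' hg; apply: genh.1.
apply: nakayama.
  by move=> y /sub' hy; split; [apply: genh.1 | apply: homh].
move=> r hr; have [c' hc'] := MI genh hr.
pose E j := c' j - c' k / c k * c j.
pose e y := \sum_(j < size hs | hs`_j == y) E j.
exists e.
have -> : \sum_(y <- hs') e y *: y = \sum_(j < size hs) E j *: hs`_j.
  rewrite big_filter (big_nth 0) big_mkord [RHS](bigD1 k) //=.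
  have -> : E k = 0 by rewrite /E divfK // subrr.
  rewrite scale0r add0r; apply: eq_big => [j|j _].
    by rewrite /= /hk nth_uniq.
  congr (_ *: _); rewrite /e (eq_bigl (fun j' : 'I_(size hs) => j' == j)) ?big_pred1_eq // => j'.
  by rewrite nth_uniq.
have -> : \sum_(j < size hs) E j *: hs`_j =
    \sum_(j < size hs) c' j *: hs`_j - (c' k / c k) *: \sum_(j < size hs) c j *: hs`_j.
  rewrite scaler_sumr -sumrB; apply: eq_bigr => j _; by rewrite scalerA scalerBl.
rewrite opprB addrA addrAC; apply: JD => //; exact: JZ.
Qed.

Lemma JE x : Rinv x -> (in_ideal SH f x <-> J x).
Proof. by move=> hx; split; [exact: Tr_J | exact: J_SH]. Qed.

Lemma part2 (gs : seq {mpoly F[d]}) :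
  uniq gs -> (forall g, g \in gs -> Rinv g /\ is_homog g) ->
  (exists hs, min_homog_gen A Rinv hs /\ size gs = size hs /\
     perm_eq (map (@hdeg F d) gs) (map (@hdeg F d) hs)) ->
  (generates A Rinv gs <-> lin_indep_mod SH f gs).
Proof.
move=> ug hgs [hs [hmin [hsz _]]].
have [uh homh genh minh] := hmin.
have HIh := HI hmin.
have hg : forall k : 'I_(size gs), Rinv gs`_k by move=> k; apply: (proj1 (hgs _ (mem_nth 0 (ltn_ord k)))).
have hh : forall j : 'I_(size hs), Rinv hs`_j by move=> j; apply: genh.1; exact: mem_nth.
pose cM k := proj1_sig (constructive_indefinite_description _ (MI genh (hg k))).
have hcM (k : 'I_(size gs)) : J (gs`_k - \sum_(j < size hs) cM k j *: hs`_j) :=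
  proj2_sig (constructive_indefinite_description _ (MI genh (hg k))).
pose M : 'M[F]_(size gs, size hs) := \matrix_(k, j) cM k j.
have lin : forall v : 'rV[F]_(size gs),
    J (\sum_(k < size gs) v 0 k *: gs`_k - \sum_(j < size hs) (v *m M) 0 j *: hs`_j).
  move=> v.
  have -> : \sum_(j < size hs) (v *m M) 0 j *: hs`_j =
      \sum_(k < size gs) v 0 k *: \sum_(j < size hs) cM k j *: hs`_j.
    under eq_bigr => j _ do rewrite mxE scaler_suml.
    rewrite exchange_big /=; apply: eq_bigr => k _; rewrite scaler_sumr.
    by apply: eq_bigr => j _; rewrite mxE scalerA.
  by rewrite -sumrB; apply: J_sum => k _; rewrite -scalerBr; apply: JZ.
have indE : lin_indep_mod SH f gs <->
    (forall c : 'I_(size gs) -> F, J (\sum_(k < size gs) c k *: gs`_k) -> forall k, c k = 0).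
  have hs_inv c : Rinv (\sum_(k < size gs) c k *: gs`_k) by apply: inv_sum => k _; apply: invZ.
  by split => h c hc; apply: h; apply/(JE (hs_inv c)).
have indM : (forall c : 'I_(size gs) -> F, J (\sum_(k < size gs) c k *: gs`_k) -> forall k, c k = 0)
    <-> row_free M.
  split => [h|hfree c hc k].
    rewrite -kermx_eq0; apply/eqP/row_matrixP => i; rewrite row0.
    set v := row i (kermx M).
    have vM : v *m M = 0 by rewrite /v -row_mul mulmx_ker row0.
    have := lin v; rewrite vM.
    have -> : \sum_(j < size hs) (0 : 'rV[F]_(size hs)) 0 j *: hs`_j = 0.
      by apply: big1 => j _; rewrite mxE scale0r.
    rewrite subr0 => /h hv; apply/rowP => k; by have := hv k; rewrite /v !mxE.
  pose v := \row_(k < size gs) c k.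
  have hv : v *m M = 0 *m M.
    rewrite mul0mx; apply/rowP => j; rewrite [RHS]mxE; move: j; apply: HIh.
    have ev : \sum_(k0 < size gs) v 0 k0 *: gs`_k0 = \sum_(k0 < size gs) c k0 *: gs`_k0.
      by apply: eq_bigr => k0 _; rewrite mxE.
    by have := JB hc (lin v); rewrite opprB addrA ev addrAC subrr add0r.
  by have := row_free_inj hfree hv => /rowP /(_ k); rewrite !mxE.
have freefull : row_free M = row_full M.
  by rewrite /row_free /row_full; move: (\rank M) => rk; rewrite hsz.
rewrite indE indM; split => [gen|hfree].
  rewrite freefull; apply/row_fullP.
  pose cC j := proj1_sig (constructive_indefinite_description _ (MI gen (hh j))).
  have hcC (j : 'I_(size hs)) : J (hs`_j - \sum_(k < size gs) cC j k *: gs`_k) :=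
    proj2_sig (constructive_indefinite_description _ (MI gen (hh j))).
  exists (\matrix_(j, k) cC j k); apply/matrixP => j l.
  have hj := JD (hcC j) (lin (row j (\matrix_(j, k) cC j k))).
  have e1 : \sum_(k < size gs) (row j (\matrix_(j, k) cC j k)) 0 k *: gs`_k =
      \sum_(k < size gs) cC j k *: gs`_k by apply: eq_bigr => k _; rewrite !mxE.
  rewrite e1 addrA subrK -row_mul in hj.
  have e2 : hs`_j = \sum_(l < size hs) (1%:M : 'M[F]_(size hs)) j l *: hs`_l.
    rewrite (bigD1 j) //= mxE eqxx scale1r big1 ?addr0 // => l' hl'.
    by rewrite mxE eq_sym (negbTE hl') scale0r.
  rewrite e2 -sumrB in hj.
  move: hj; under eq_bigr => i _ do rewrite -scalerBl; move=> hj.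
  have := HIh _ hj l; rewrite !mxE => /eqP; rewrite subr_eq0 => /eqP <-.
  by [].
have full : row_full M by rewrite -freefull.
have [B hB] := row_fullP full.
split; first by move=> g /hgs [].
apply: nakayama; first exact: hgs.
move=> r hr; apply: span_conv => //.
have [dd hdd] := MI genh hr.
pose v := (\row_(j < size hs) dd j) *m B.
exists (fun k => v 0 k).
have hvM : v *m M = \row_(j < size hs) dd j by rewrite /v -mulmxA hB mulmx1.
have := JB hdd (lin v); rewrite hvM.
have -> : \sum_(j < size hs) (\row_j0 dd j0) 0 j *: hs`_j = \sum_(j < size hs) dd j *: hs`_j.
  by apply: eq_bigr => j _; rewrite mxE.
by rewrite opprB addrA subrK.
Qed.

End Main.

Unset Implicit Arguments.

Theorem mainTheorem3 (F : fieldType) (gT : finGroupType) (G H : {group gT})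
  (d n : nat) (rG : mx_representation F G d) (f : 'I_n -> {mpoly F[d]}) :
  hsop (invariants G rG) f ->
  H \subset G ->
  (forall p : nat, p \in [pchar F] -> ~~ (p %| #|G : H|%g)%N) ->
  (forall r, invariants G rG r ->
     (in_ideal (invariants H rG) f r <-> FplusR f (invariants G rG) r)) /\
  (cohen_macaulay (invariants G rG) f ->
   forall gs : seq {mpoly F[d]},
     uniq gs ->
     (forall g, g \in gs -> invariants G rG g /\ is_homog g) ->
     (exists hs, min_homog_gen (polysub f) (invariants G rG) hs /\
        size gs = size hs /\ perm_eq (map (@hdeg F d) gs) (map (@hdeg F d) hs)) ->
     (generates (polysub f) (invariants G rG) gs <->
      lin_indep_mod (invariants H rG) f gs)).
Proof.
move=> [hf hfh _ _] sHG hchar; split.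
  by move=> r hr; apply: (part1 sHG hchar hf hr).
by move=> _ gs ug hgs hex; apply: (part2 sHG hchar hf hfh ug hgs hex).
Qed.
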